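(* Let $k\geq 3$ be an integer and let $H$ be a $k$-vertex graph which is not the $k$-clique. Then any deterministic distributed dynamic data structure for $H$ membership listing that handles edge insertions and deletions requires $\Omega\left(\frac{n}{\log n}\right)$ amortized rounds.
   Context: Highly dynamic network model: a synchronous network on a fixed set $V$ of $n$ nodes with unique identifiers starts as the empty graph; at the beginning of round $i$ the graph is $G_i=(V,E_i)$, obtained from the previous graph by an adversary inserting and/or deleting an arbitrary (unbounded) set of edges. At the start of each round every node is notified only of the insertions/deletions of edges incident to it; then each node may send a message of $O(\log n)$ bits to each of its current neighbors. A distributed dynamic data structure consists of a local part $DS_v$ at each node $v$; at the end of every round, $DS_v$ may be queried and must answer immediately, without any further communication, either with a correct answer to the query or with $\texttt{inconsistent}$. The amortized round complexity is at most $c$ if for every round $i$, the number of rounds up to round $i$ in which at least one node $v$ has $DS_v$ in an inconsistent state, divided by the total number of topology changes that occurred up to round $i$, is at most $c$. $H$ membership listing: $DS_v$ at each node $v$ must respond at the end of round $i$ to a query consisting of a copy of $H$ on a $k$-element node set containing $v$ with $\texttt{true}$ if this copy of $H$ is present in $G_i$, $\texttt{false}$ if it is not, or $\texttt{inconsistent}$. *)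

(* Defs.v *)
From mathcomp Require Import all_boot all_order all_algebra.
Set Implicit Arguments. Unset Strict Implicit. Unset Printing Implicit Defensive.
Import GRing.Theory Num.Theory.

(* A dynamic graph sequence on node set 'I_n: G i is the graph at round i
   (adjacency relation); G 0 is the initial (empty) graph. *)
Definition dyn_graph (n : nat) := nat -> 'I_n -> 'I_n -> bool.

Definition valid_dyn_graph n (G : dyn_graph n) : Prop :=
  [/\ (forall i u v, G i u v = G i v u),
      (forall i u, G i u u = false) &
      (forall u v, G 0 u v = false)].

Definition changes_at n (G : dyn_graph n) (j : nat) : nat :=
  #|[set p : 'I_n * 'I_n | (p.1 < p.2) && (G j p.1 p.2 != G j.-1 p.1 p.2)]|.

(* A query at v is a labelled copy f : 'I_k -> 'I_n (injective, v in its image);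
   the answer is Some b (true/false) or None (= inconsistent). *)
Record dyn_alg (n k : nat) := DynAlg {
  state : Type;
  init : 'I_n -> state;
  (* local notification of the incident edge changes:
     for each u, (was uv an edge before, is uv an edge now) *)
  notify : 'I_n -> state -> ('I_n -> bool * bool) -> state;
  send : 'I_n -> state -> 'I_n -> seq bool;
  (* state update on receipt of messages (Some m from current neighbours) *)
  recv : 'I_n -> state -> ('I_n -> option (seq bool)) -> state;
  answer : 'I_n -> state -> {ffun 'I_k -> 'I_n} -> option bool }.
Arguments state {n k} _.
Arguments init {n k} _.
Arguments notify {n k} _.
Arguments send {n k} _.
Arguments recv {n k} _.
Arguments answer {n k} _.

Definition bandwidth n k (A : dyn_alg n k) (B : nat) : Prop :=
  forall v s u, size (send A v s u) <= B.

Fixpoint run n k (A : dyn_alg n k) (G : dyn_graph n) (i : nat)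
  : 'I_n -> state A :=
  match i with
  | 0 => init A
  | j.+1 =>
      let prev := run A G j in
      let s1 := fun v => notify A v (prev v) (fun u => (G j v u, G j.+1 v u)) in
      fun v => recv A v (s1 v)
                 (fun u => if G j.+1 v u then Some (send A u (s1 u) v) else None)
  end.

Definition present n k (H : rel 'I_k) (G : dyn_graph n) (i : nat)
  (f : {ffun 'I_k -> 'I_n}) : bool :=
  [forall a, forall b, (a != b) ==> (G i (f a) (f b) == H a b)].

Definition valid_query n k (v : 'I_n) (f : {ffun 'I_k -> 'I_n}) : bool :=
  injectiveb f && (v \in codom f).

Definition correct n k (H : rel 'I_k) (A : dyn_alg n k) : Prop :=
  forall G : dyn_graph n, valid_dyn_graph G ->
  forall i v f b, valid_query v f ->
    answer A v (run A G i.+1 v) f = Some b -> b = present H G i.+1 f.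

Definition inconsistent_round n k (A : dyn_alg n k) (G : dyn_graph n) (j : nat)
  : bool :=
  [exists v, exists f : {ffun 'I_k -> 'I_n},
     valid_query v f && (answer A v (run A G j v) f == None)].

Definition amortized_at_most n k (A : dyn_alg n k) (c : rat) : Prop :=
  forall G : dyn_graph n, valid_dyn_graph G -> forall i : nat,
    (((\sum_(1 <= j < i.+1) inconsistent_round A G j)%N%:R : rat)
      <= c * ((\sum_(1 <= j < i.+1) changes_at G j)%N%:R))%R.

(* Main.v *)
Require Import Defs.
From mathcomp Require Import all_boot all_order all_algebra.
From mathcomp Require Import zify.
From Stdlib Require Import FunctionalExtensionality.
Import Order.TTheory GRing.Theory Num.Theory.
Set Implicit Arguments. Unset Strict Implicit. Unset Printing Implicit Defensive.

Definition s1 n k (A : dyn_alg n k) (G : dyn_graph n) (i : nat) (u : 'I_n) :=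
  notify A u (run A G i.-1 u) (fun w => (G i.-1 u w, G i u w)).

Lemma run_local n k (A : dyn_alg n k) (G G' : dyn_graph n) v r :
  (forall i, (i <= r)%N -> G i v =1 G' i v) ->
  (forall i, (0 < i <= r)%N -> forall u, G i v u ->
      send A u (s1 A G i u) v = send A u (s1 A G' i u) v) ->
  run A G r v = run A G' r v.
Proof.
elim: r => [//|r IH] HG HS /=.
have IH' : run A G r v = run A G' r v.
  by apply: IH => [i Hi|i Hi u Hu]; [apply: HG; lia | apply: HS => //; lia].
rewrite IH'.
have -> : (fun u => (G r v u, G r.+1 v u)) = (fun u => (G' r v u, G' r.+1 v u)).
  by apply: functional_extensionality => u; rewrite !HG //; lia.
congr (recv A v _ _).
apply: functional_extensionality => u.
rewrite -HG //.
case E: (G r.+1 v u) => //.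
by have := HS r.+1 (ltac:(lia)) u E; rewrite /s1 /= => ->.
Qed.

Lemma sum_windows (f : nat -> nat) P D :
  \sum_(1 <= j < (P * D).+1) f j = \sum_(q < P) \sum_(t < D) f (q * D + t).+1.
Proof.
elim: P => [|P IH]; first by rewrite mul0n big_ord0 big_geq.
rewrite big_ord_recr /= -IH.
rewrite (big_cat_nat _ (n := (P * D).+1)) //=; last by rewrite ltnS mulSn; lia.
congr (_ + _).
rewrite -[X in \sum_(X <= _ < _) _]add0n big_addn big_mkord.
have -> : (P.+1 * D).+1 - (P * D).+1 = D by rewrite mulSn; lia.
apply: eq_bigr => t _; congr f; lia.
Qed.

Section Cons.
Variables (k : nat) (H : rel 'I_k) (r p1 p2 : 'I_k) (m P D : nat).
Hypothesis Hsym : symmetric H.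

Definition Hn (x y : nat) : bool :=
  match (insub x : option 'I_k), (insub y : option 'I_k) with
  | Some a, Some b => H a b
  | _, _ => false end.

Lemma Hn_val (a b : 'I_k) : Hn a b = H a b.
Proof. by rewrite /Hn !valK. Qed.

Lemma Hn_sym x y : Hn x y = Hn y x.
Proof.
rewrite /Hn; case: (insub x : option 'I_k) => [a|]; case: (insub y : option 'I_k) => [b|] //.

Qed.

Lemma Hn_lt x y : Hn x y -> x < k.
Proof.
rewrite /Hn; case: (ltnP x k) => // Hx.
by rewrite insubN // -leqNgt.
Qed.

Definition e (g : nat -> bool) (i x y : nat) : bool :=
  [&& x < k, x != r, x != p2 &
    if y < k then [&& y != r, y != p2 & Hn x y]
    else if y < k + m then (if x == p1 then g (y - k) else Hn x p2)
    else if y < k + m + P then ((y - k - m) * D + 1 <= i) && Hn r x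
    else false].

Definition Gn g i x y := [&& i != 0, x != y & e g i x y || e g i y x].

Lemma GnC g i x y : Gn g i x y = Gn g i y x.
Proof. by rewrite /Gn (eq_sym y x) orbC. Qed.

Lemma Gn_V g i q y : q < P ->
  Gn g i (k + m + q) y = [&& i != 0, y < k, y != r, y != p2, q * D + 1 <= i & Hn r y].
Proof.
move=> qP; rewrite /Gn /e.
have -> : (k + m + q < k) = false by lia.
rewrite /=.
have -> : (k + m + q < k + m) = false by lia.
have -> : (k + m + q < k + m + P) by lia.
have -> : k + m + q - k - m = q by lia.
case: (i != 0) => //=.
case yk: (y < k) => /=; last by rewrite !andbF.
have -> : (k + m + q != y) by lia.
done.
Qed.

Lemma Gn_Yt g i y t : y < m -> t < k ->
  Gn g i (k + y) t = [&& i != 0, t != r, t != p2 & if t == p1 then g y else Hn t p2].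
Proof.
move=> ym tk; rewrite /Gn /e.
have -> : (k + y < k) = false by lia.
have -> : (k + y != t) by lia.
have -> : (k + y < k + m) by lia.
have -> : k + y - k = y by lia.
by rewrite /= tk.
Qed.

Lemma Gn_tt g i t t' : t < k -> t' < k -> t != t' ->
  Gn g i t t' = [&& i != 0, t != r, t != p2, t' != r, t' != p2 & Hn t t'].
Proof.
move=> tk tk' ne; rewrite /Gn /e tk tk' ne /=.
rewrite (Hn_sym t' t).
by case: (t != r); case: (t != p2); case: (t' != r); case: (t' != p2); case: (Hn t t'); rewrite ?andbF.
Qed.

Hypothesis Hirr : irreflexive H.
Hypothesis rp1 : r != p1.
Hypothesis rp2 : r != p2.
Hypothesis p12 : p1 != p2.
Hypothesis Hrp2 : ~~ H r p2.

Definition F (q y : nat) (t : 'I_k) : nat :=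
  if t == r then k + m + q else if t == p2 then k + y else t.

Definition expct (g : nat -> bool) (y : nat) (a b : 'I_k) : bool :=
  if ((a == p1) && (b == p2)) || ((a == p2) && (b == p1)) then g y else H a b.

Lemma expctC g y a b : expct g y a b = expct g y b a.
Proof.
rewrite /expct Hsym; case: (a == p1); case: (b == p2); case: (a == p2); case: (b == p1) => //.
Qed.

Lemma pair_r g i q y b : q < P -> y < m -> i != 0 -> q * D + 1 <= i -> b != r ->
  Gn g i (F q y r) (F q y b) = expct g y r b.
Proof.
move=> qP ym i0 qi br.
rewrite /F eqxx (negbTE br) Gn_V // i0 qi /expct (negbTE rp1) (negbTE rp2) /=.
case: ifP => [/eqP -> | bp2]; first by rewrite (negbTE Hrp2) /=; have -> : (k + y < k) = false by lia.
rewrite ltn_ord /=.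
have -> : (nat_of_ord b != nat_of_ord r) = (b != r) by [].
have -> : (nat_of_ord b != nat_of_ord p2) = (b != p2) by [].
by rewrite br bp2 Hn_val.
Qed.

Lemma pair_p2 g i q y b : y < m -> i != 0 -> b != r -> b != p2 ->
  Gn g i (F q y p2) (F q y b) = expct g y p2 b.
Proof.
move=> ym i0 br bp2.
rewrite /F eqxx (negbTE br) (negbTE bp2) (eq_sym p2 r) (negbTE rp2).
rewrite Gn_Yt // i0 /expct.
have -> : (nat_of_ord b != nat_of_ord r) = (b != r) by [].
have -> : (nat_of_ord b != nat_of_ord p2) = (b != p2) by [].
have -> : (nat_of_ord b == nat_of_ord p1) = (b == p1) by [].
rewrite br bp2 (eq_sym p2 p1) (negbTE p12) eqxx /=.
by case: (b == p1) => //; rewrite Hn_val Hsym.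
Qed.

Lemma pair_all g i q y a b : q < P -> y < m -> i != 0 -> q * D + 1 <= i -> a != b ->
  Gn g i (F q y a) (F q y b) = expct g y a b.
Proof.
move=> qP ym i0 qi ab.
case: (eqVneq a r) => [Ear|ar]; first by rewrite Ear; apply: pair_r => //; rewrite -Ear eq_sym.
case: (eqVneq b r) => [Ebr|br]; first by rewrite GnC expctC Ebr; apply: pair_r.
case: (eqVneq a p2) => [Eap|ap]; first by rewrite Eap; apply: pair_p2 => //; rewrite -Eap eq_sym.
case: (eqVneq b p2) => [Ebp|bp]; first by rewrite GnC expctC Ebp; apply: pair_p2.
rewrite /F (negbTE ar) (negbTE br) (negbTE ap) (negbTE bp) Gn_tt //.
rewrite i0 /= ar br ap bp Hn_val /expct (negbTE ap) (negbTE bp) /=.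
by rewrite !andbF.
Qed.

Variable n' : nat.
Hypothesis kmP : k + m + P <= n'.+1.

Definition G (g : nat -> bool) : dyn_graph n'.+1 := fun i u v => Gn g i u v.

Lemma G_valid g : valid_dyn_graph (G g).
Proof.
split => [i u v|i u|u v]; rewrite /G.
- exact: GnC.
- by rewrite /Gn eqxx andbF.
- by [].
Qed.

Definition fq (q y : nat) : {ffun 'I_k -> 'I_n'.+1} := [ffun t => inord (F q y t)].

Lemma F_le q y t : q < P -> y < m -> F q y t <= n'.
Proof. move=> qP ym; rewrite /F; case: ifP => _; last case: ifP => _; have := ltn_ord t; lia. Qed.

Lemma fq_val q y t : q < P -> y < m -> val (fq q y t) = F q y t.
Proof. by move=> qP ym; rewrite ffunE /= inordK // ltnS F_le. Qed.

Lemma F_inj q y : q < P -> y < m -> injective (F q y).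
Proof.
move=> qP ym a b; rewrite /F.
have ak := ltn_ord a; have bk := ltn_ord b.
case Ha: (a == r); case Hb: (b == r); case Ha2: (a == p2); case Hb2: (b == p2); move=> E; try lia.
all: try (by move/eqP: Ha => ->; move/eqP: Hb => ->).
all: try (by move/eqP: Ha2 => ->; move/eqP: Hb2 => ->).
all: by apply: val_inj.
Qed.

Lemma valid_fq q y : q < P -> y < m -> valid_query (inord (k + m + q)) (fq q y).
Proof.
move=> qP ym; apply/andP; split.
  apply/injectiveP => a b /(congr1 val); rewrite !fq_val //; exact: F_inj.
apply/codomP; exists r; apply: val_inj.
by rewrite fq_val // /F eqxx /= inordK //; lia.
Qed.

Lemma present_fq g i q y : q < P -> y < m -> i != 0 -> q * D + 1 <= i ->
  present H (G g) i (fq q y) = (g y == H p1 p2).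
Proof.
move=> qP ym i0 qi.
have E a b : a != b -> (G g i (fq q y a) (fq q y b) == H a b) = (expct g y a b == H a b).
  by move=> ab; rewrite /G !fq_val // pair_all.
apply/idP/idP.
  move/forallP/(_ p1)/forallP/(_ p2); rewrite p12 /= E //.
  by rewrite /expct !eqxx.
move=> Eg; apply/forallP => a; apply/forallP => b; apply/implyP => ab.
rewrite E // /expct; case: ifP => // /orP [/andP[/eqP-> /eqP->] | /andP[/eqP-> /eqP->]] //.
by rewrite Hsym.
Qed.

Definition Vn (q : nat) : 'I_n'.+1 := inord (k + m + q).

Lemma Vn_val q : q < P -> (Vn q : nat) = k + m + q.
Proof. by move=> qP; rewrite /Vn inordK //; lia. Qed.

Lemma G_V g i q (u : 'I_n'.+1) : q < P ->
  G g i (Vn q) u = [&& i != 0, u < k, u != r :> nat, u != p2 :> nat, q * D + 1 <= i & Hn r u].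
Proof. by move=> qP; rewrite /G Vn_val // Gn_V. Qed.

Variable A : dyn_alg n'.+1 k.
Variable B : nat.
Hypothesis HB : bandwidth A B.
Hypothesis HA : correct H A.

Definition enc (sq : seq bool) : 'I_B.+1 * {ffun 'I_B -> bool} :=
  (inord (size sq), [ffun i : 'I_B => nth false sq i]).

Lemma enc_inj a b : size a <= B -> size b <= B -> enc a = enc b -> a = b.
Proof.
move=> Ha Hb [] /(congr1 val); rewrite /= !inordK // => Es /ffunP Ef.
apply: (eq_from_nth (x0 := false) Es) => i ia.
have iB : i < B by apply: leq_trans Ha.
by have := Ef (Ordinal iB); rewrite !ffunE.
Qed.

Definition tr (g : nat -> bool) (q : nat) : {ffun 'I_D * 'I_k -> 'I_B.+1 * {ffun 'I_B -> bool}} :=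
  [ffun p : 'I_D * 'I_k => enc (send A (inord p.2) (s1 A (G g) (q * D + p.1).+1 (inord p.2)) (Vn q))].

Lemma state_eq g g' q t : q < P -> t < D -> tr g q = tr g' q ->
  run A (G g) (q * D + t).+1 (Vn q) = run A (G g') (q * D + t).+1 (Vn q).
Proof.
move=> qP tD Etr; apply: run_local => [i _ u|i Hi u].
  by rewrite !G_V.
rewrite G_V // => /and5P [_ uk _ _ /andP [qi _]].
have t'D : i.-1 - q * D < D by lia.
have Ei : i = (q * D + Ordinal t'D).+1 by rewrite /=; lia.
have Eu : u = inord (Ordinal uk) by rewrite /= inord_val.
move/ffunP: Etr => /(_ (Ordinal t'D, Ordinal uk)).
rewrite /tr !ffunE /= -Ei -Eu.
by apply: enc_inj; apply: HB.
Qed.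

Definition incons g R := inconsistent_round A (G g) R.

Lemma determine g g' q t : q < P -> t < D ->
  ~~ incons g (q * D + t).+1 ->
  run A (G g) (q * D + t).+1 (Vn q) = run A (G g') (q * D + t).+1 (Vn q) ->
  forall y, y < m -> g y = g' y.
Proof.
move=> qP tD Hc Es y ym.
have vq := valid_fq qP ym.
move/existsPn: Hc => /(_ (Vn q)) /existsPn /(_ (fq q y)).
rewrite vq /= => Hn0.
case Ea: (answer A (Vn q) (run A (G g) (q * D + t).+1 (Vn q)) (fq q y)) => [b|]; last by rewrite Ea in Hn0.
have Eb := HA (G_valid g) vq Ea.
have Ea' : answer A (Vn q) (run A (G g') (q * D + t).+1 (Vn q)) (fq q y) = Some b by rewrite -Es.
have Eb' := HA (G_valid g') vq Ea'.
have i0 : (q * D + t).+1 != 0 by [].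
have qi : q * D + 1 <= (q * D + t).+1 by lia.
move: Eb Eb'; rewrite !present_fq // => -> /eqP.
by case: (g y); case: (g' y); case: (H p1 p2).
Qed.

Definition gs (s : {ffun 'I_m -> bool}) (y : nat) : bool :=
  if (insub y : option 'I_m) is Some i then s i else false.

Lemma count_bound :
  (forall s : {ffun 'I_m -> bool}, exists q : 'I_P, exists t : 'I_D,
      ~~ incons (gs s) (q * D + t).+1) ->
  2 ^ m <= P * D * (B.+1 * 2 ^ B) ^ (D * k).
Proof.
move=> Hall.
pose S (qt : 'I_P * 'I_D) :=
  [set s : {ffun 'I_m -> bool} | ~~ incons (gs s) (qt.1 * D + qt.2).+1].
have h1 : #|{ffun 'I_m -> bool}| <= \sum_(qt : 'I_P * 'I_D) #|S qt|.
  have -> : #|{ffun 'I_m -> bool}| = \sum_(s : {ffun 'I_m -> bool}) 1 by rewrite sum1_card.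
  under [X in _ <= X]eq_bigr => qt _ do rewrite -sum1_card big_mkcond /=.
  rewrite exchange_big /=.
  apply: leq_sum => s _.
  have [q [t Hqt]] := Hall s.
  rewrite (bigD1 (q, t)) //= inE Hqt.
  exact: leq_addr.
have h2 qt : #|S qt| <= #|{ffun 'I_D * 'I_k -> 'I_B.+1 * {ffun 'I_B -> bool}}|.
  apply: (@leq_card_in _ _ (fun s => tr (gs s) qt.1)) => s s'.
  rewrite !inE => Hs _ Etr.
  have Est := state_eq (ltn_ord qt.1) (ltn_ord qt.2) Etr.
  have Ed := determine (ltn_ord qt.1) (ltn_ord qt.2) Hs Est.
  apply/ffunP => i.
  have := Ed i (ltn_ord i).
  by rewrite /gs valK.
rewrite card_ffun card_bool card_ord in h1. apply: (leq_trans h1).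
have h3 : \sum_(qt : 'I_P * 'I_D) #|S qt| <= \sum_(qt : 'I_P * 'I_D) #|{ffun 'I_D * 'I_k -> 'I_B.+1 * {ffun 'I_B -> bool}}| by apply: leq_sum => qt _; exact: h2.
apply: (leq_trans h3).
rewrite sum_nat_const card_prod !card_ffun card_prod !card_ord card_ffun card_ord card_bool.
rewrite card_prod !card_ord /= mulnC. 
by [].
Qed.

Lemma e_diff g i i' x y : e g i x y != e g i' x y ->
  x < k /\ exists w, [/\ y = k + m + w, w < P & (w * D + 1 <= i) != (w * D + 1 <= i')].
Proof.
move=> Hd; have xk : x < k by move: Hd; rewrite /e; case: (x < k).
split => //; move: Hd; rewrite /e xk /=.
case: (x != r); case: (x != p2) => //=.
case yk: (y < k); first by rewrite eqxx.
case ykm: (y < k + m); first by rewrite eqxx.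
case ykmP: (y < k + m + P); last by rewrite eqxx.
move=> Hd; exists (y - k - m); split; try lia.
Qed.

Lemma Gn_diff g i i' x y : i != 0 -> i' != 0 -> Gn g i x y != Gn g i' x y ->
  (e g i x y != e g i' x y) \/ (e g i y x != e g i' y x).
Proof.
move=> i0 i0'; rewrite /Gn i0 i0' /=.
case: (x != y) => //=.
case: (e g i x y); case: (e g i' x y); case: (e g i y x); case: (e g i' y x) => //= _;
  by [left | right].
Qed.

Lemma card_sub_img (T U : finType) (f : U -> T) (S : {set T}) :
  (forall x, x \in S -> exists u, x = f u) -> #|S| <= #|U|.
Proof.
move=> HS; apply: leq_trans (leq_imset_card f U).
apply: subset_leq_card; apply/subsetP => x /HS [u ->].
exact: imset_f.
Qed.

Lemma thresh w q t : 0 < t < D -> (w * D + 1 <= (q * D + t).+1) = (w * D + 1 <= q * D + t).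
Proof.
move=> tD; case: (leqP w q) => h.
  have := leq_mul h (leqnn D); move=> h2; apply/idP/idP => _; lia.
have := leq_mul h (leqnn D); rewrite mulSn => h2; apply/idP/idP; lia.
Qed.

Lemma changes_mid g q t : 0 < t < D -> changes_at (G g) (q * D + t).+1 = 0.
Proof.
move=> tD; apply/eqP; rewrite cards_eq0; apply/eqP/setP => p; rewrite !inE /=.
case E: (G g _ p.1 p.2 != G g _ p.1 p.2); last by rewrite andbF.
exfalso; rewrite /G in E.
have i0 : (q * D + t) != 0 by lia.
have [] := @Gn_diff g (q * D + t).+1 (q * D + t) p.1 p.2 isT i0 E => /e_diff [_ [w [_ _]]]; by rewrite thresh // eqxx.
Qed.

Lemma thresh0 w q : 0 < D -> (w * D + 1 <= (q * D).+1) != (w * D + 1 <= q * D) -> w = q.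
Proof.
move=> D0; case: (ltngtP w q) => // h.
  have := leq_mul h (leqnn D); rewrite mulSn => h2.
  have -> : (w * D + 1 <= (q * D).+1) = true by apply/idP; lia.
  by have -> : (w * D + 1 <= q * D) = true by apply/idP; lia.
have := leq_mul h (leqnn D); rewrite mulSn => h2.
have -> : (w * D + 1 <= (q * D).+1) = false by apply/negbTE; rewrite -ltnNge; lia.
by have -> : (w * D + 1 <= q * D) = false by apply/negbTE; rewrite -ltnNge; lia.
Qed.

Lemma changes_start g q : 0 < D -> 0 < q < P -> changes_at (G g) (q * D + 0).+1 <= k * 2.
Proof.
move=> D0 qP; rewrite addn0.
have -> : k * 2 = #|{: 'I_k * bool}| by rewrite card_prod card_ord card_bool.
apply: (card_sub_img (f := fun ab : 'I_k * bool =>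
  if ab.2 then (inord ab.1, Vn q) else (Vn q, inord ab.1))) => p.
rewrite inE /G => /andP [_ E].
have i0 : (q * D) != 0 by rewrite muln_eq0 negb_or; lia.
have qP' : q < P by lia.
have [] := @Gn_diff g (q * D).+1 (q * D) p.1 p.2 isT i0 E => /e_diff [xk [w [Ey wP Hw]]].
- have Ew := thresh0 D0 Hw; subst w.
  exists (Ordinal xk, true); case: p xk Ey {E} => [a b] /= xk Ey.
  by congr pair; apply: val_inj; rewrite /= ?inordK ?Vn_val //; lia.
- have Ew := thresh0 D0 Hw; subst w.
  exists (Ordinal xk, false); case: p xk Ey {E} => [a b] /= xk Ey.
  by congr pair; apply: val_inj; rewrite /= ?inordK ?Vn_val //; lia.
Qed.

Lemma changes_first g : changes_at (G g) 1 <= k * n'.+1 * 2.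
Proof.
have -> : k * n'.+1 * 2 = #|{: 'I_k * 'I_n'.+1 * bool}| by rewrite !card_prod !card_ord card_bool.
apply: (card_sub_img (f := fun ab : 'I_k * 'I_n'.+1 * bool =>
  if ab.2 then (inord ab.1.1, ab.1.2) else (ab.1.2, inord ab.1.1))) => p.
rewrite inE /G /= => /andP [_ E].
move: E; rewrite /Gn /= eqbF_neg negbK => /andP [_ /orP [] He].
- have xk : p.1 < k by move: He; rewrite /e; case: (_ < k).
  exists (Ordinal xk, p.2, true); case: p xk {He} => [a b] /= xk.
  by congr pair; apply: val_inj; rewrite /= inordK //; lia.
- have xk : p.2 < k by move: He; rewrite /e; case: (_ < k).
  exists (Ordinal xk, p.1, false); case: p xk {He} => [a b] /= xk.
  by congr pair; apply: val_inj; rewrite /= inordK //; lia.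
Qed.

Lemma window_sum g q : 0 < D ->
  \sum_(t < D) changes_at (G g) (q * D + t).+1 = changes_at (G g) (q * D + 0).+1.
Proof.
move=> D0.
rewrite -(big_mkord xpredT (fun t => changes_at (G g) (q * D + t).+1)) big_ltn //.
rewrite big_nat_cond big1 ?addn0 // => t /andP [/andP [t1 tD] _].
by rewrite changes_mid // t1.
Qed.

Lemma changes_sum g : 0 < D -> 0 < P ->
  \sum_(1 <= j < (P * D).+1) changes_at (G g) j <= k * n'.+1 * 2 + P * (k * 2).
Proof.
move=> D0 P0; rewrite sum_windows.
under eq_bigr => q _ do rewrite window_sum //.
rewrite -(big_mkord xpredT (fun q => changes_at (G g) (q * D + 0).+1)) big_ltn //.
rewrite mul0n add0n; apply: leq_add; first exact: changes_first.
apply: leq_trans (_ : \sum_(1 <= q < P) (k * 2) <= _).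
  rewrite big_nat_cond [X in _ <= X]big_nat_cond; apply: leq_sum => q /andP [/andP [q1 qP] _].
  by apply: changes_start => //; rewrite q1.
by rewrite sum_nat_const_nat leq_mul2r; apply/orP; right; lia.
Qed.

Lemma incons_sum g : (forall q t, q < P -> t < D -> incons g (q * D + t).+1) ->
  \sum_(1 <= j < (P * D).+1) incons g j = P * D.
Proof.
move=> Hall; rewrite sum_windows.
rewrite (eq_bigr (fun _ => D)) ?sum_nat_const ?card_ord // => q _.
rewrite (eq_bigr (fun _ => 1)) ?sum_nat_const ?card_ord ?muln1 // => t _.
by rewrite Hall.
Qed.
End Cons.
Lemma exp_sq L : 4 <= L -> L * L <= 2 ^ L.
Proof.
elim: L => // L IH; rewrite leq_eqVlt => /orP [/eqP <- //|].
rewrite ltnS => H4; have h := IH H4; have h2 := leq_mul H4 (leqnn L); rewrite expnS; lia.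
Qed.

Lemma exp_4sq h : 10 <= h -> 4 * h * h < 2 ^ h.
Proof.
elim: h => // h IH; rewrite leq_eqVlt => /orP [/eqP <- //|].
rewrite ltnS => H4; have h1 := IH H4; have h2 := leq_mul H4 (leqnn h); rewrite expnS; lia.
Qed.

Lemma pigeon_arith m P D B k : P <= m -> D <= m -> D * (4 * k * B.+1) <= m -> 20 <= m ->
  P * D * (B.+1 * 2 ^ B) ^ (D * k) < 2 ^ m.
Proof.
move=> Pm Dm HD m20.
have e1 : B.+1 * 2 ^ B <= 2 ^ (2 * B.+1).
  have := ltn_expl B (isT : 1 < 2) => hB.
  apply: leq_trans (_ : 2 ^ B * 2 ^ B <= _); first exact: leq_mul.
  by rewrite -expnD leq_exp2l //; lia.
set X := 2 * B.+1 * (D * k).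
have e2 : (B.+1 * 2 ^ B) ^ (D * k) <= 2 ^ X.
  by rewrite /X (expnM 2); case: (posnP (D * k)) => [->|pos] //; rewrite leq_exp2r.
have hX : X * 2 <= m by rewrite /X; lia.
set h := m - X.
have Em : m = X + h by rewrite /h; lia.
have e3 : 4 * h * h < 2 ^ h by apply: exp_4sq; lia.
have e4 : P * D <= m * m by apply: leq_mul.
have e5 : m * m <= 4 * h * h by nia.
rewrite Em expnD.
apply: (@leq_ltn_trans (m * m * 2 ^ X)); first by apply: leq_mul.
rewrite mulnC ltn_pmul2l ?expn_gt0 //; lia.
Qed.

Lemma third k (r p2 : 'I_k) : 3 <= k -> exists p1 : 'I_k, r != p1 /\ p1 != p2.
Proof.
move=> hk.
have [v [vk vr vp]] : exists v, [/\ v < k, v != r :> nat & v != p2 :> nat].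
  case: (eqVneq (r : nat) 0) => r0; case: (eqVneq (p2 : nat) 0) => p0.
  - exists 1; split => //; lia.
  - case: (eqVneq (p2 : nat) 1) => p1'.
    + exists 2; split => //; lia.
    + exists 1; split => //; lia.
  - case: (eqVneq (r : nat) 1) => r1.
    + exists 2; split => //; lia.
    + exists 1; split => //; lia.
  - exists 0; split => //; lia.
exists (Ordinal vk); split.
  by rewrite eq_sym; apply: contra vr => /eqP <-.
by apply: contra vp => /eqP <-.
Qed.

Unset Implicit Arguments.
Local Open Scope ring_scope.

Theorem theorem3 (k : nat) (H : rel 'I_k) :
  (3 <= k)%N -> symmetric H -> irreflexive H ->
  ~ (forall a b : 'I_k, a != b -> H a b) ->
  forall C : nat, exists d : nat, exists n0 : nat,
  forall n : nat, (n0 <= n)%N ->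
  forall A : dyn_alg n k,
    bandwidth A (C * trunc_log 2 n) -> correct H A ->
  forall c : rat, amortized_at_most A c ->
    (n%:R : rat) <= c * (d * trunc_log 2 n)%N%:R.
Proof.
move=> hk Hsym Hirr Hnc C.
have [r [p2 [rp2 Hrp2]]] : exists r p2 : 'I_k, r != p2 /\ ~~ H r p2.
  case: (boolP [exists a : 'I_k, exists b : 'I_k, (a != b) && ~~ H a b]).
    by move=> /existsP [a /existsP [b /andP [ab Hab]]]; exists a, b.
  move=> /existsPn Hn; exfalso; apply: Hnc => a b ab.
  by move: (Hn a) => /existsPn /(_ b); rewrite ab /= negbK.
have [p1 [rp1 p12]] := third r p2 hk.
pose Q := (32 * k * C.+1)%N.
exists (1024 * k * k * C.+1)%N, (2 ^ (Q + 4) + 2 * k + 2)%N.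
case => [|n'] Hn A HB HA c Hc; first by lia.
set L := trunc_log 2 n'.+1.
have hL : (Q + 4 <= L)%N by apply: trunc_log_max => //; lia.
have h2L : (2 ^ L <= n'.+1)%N by apply: trunc_logP.
have hLL : (L * L <= 2 ^ L)%N by apply: exp_sq; lia.
have hQL : (Q * L <= L * L)%N by apply: leq_mul => //; lia.
set B := (C * L)%N.
set m := ((n'.+1 - k) %/ 2)%N.
set Qd := (4 * k * B.+1)%N.
set D := (m %/ Qd)%N.
have Qd0 : (0 < Qd)%N by rewrite /Qd; lia.
have hm : (n'.+1 - k = m * 2 + (n'.+1 - k) %% 2)%N by rewrite /m -divn_eq.
have hm2 : ((n'.+1 - k) %% 2 < 2)%N by rewrite ltn_pmod.
have hD : (m = D * Qd + m %% Qd)%N by rewrite /D -divn_eq.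
have hD2 : (m %% Qd < Qd)%N by rewrite ltn_pmod.
have hBL : (k * B.+1 <= k * (C.+1 * L))%N by rewrite leq_mul2l /B; apply/orP; right; lia.
have hmQ : (2 * Qd <= m)%N by rewrite /Qd /Q /B in hQL hBL *; lia.
have D0 : (0 < D)%N by rewrite lt0n; apply/eqP => D0; rewrite D0 in hD; lia.
have DQm : (D * Qd <= m)%N by lia.
have m20 : (20 <= m)%N by rewrite /Qd in hmQ; lia.
have P0 : (0 < m)%N by lia.
have kmP : (k + m + m <= n'.+1)%N by lia.
have [s Hs] : exists s : {ffun 'I_m -> bool}, forall q t, (q < m)%N -> (t < D)%N ->
    inconsistent_round A (G H r p1 p2 m m D (gs s)) (q * D + t).+1.
  case: (boolP [exists s : {ffun 'I_m -> bool}, [forall q : 'I_m, [forall t : 'I_D,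
      inconsistent_round A (G H r p1 p2 m m D (gs s)) (q * D + t).+1]]]).
    move=> /existsP [s /forallP Hs]; exists s => q t qm tD.
    by have /forallP := Hs (Ordinal qm) => /(_ (Ordinal tD)).
  move=> /existsPn Hn'; exfalso.
  have := @count_bound k H r p1 p2 m m D Hsym rp1 rp2 p12 Hrp2 n' kmP A B HB HA.
  have Hex : forall s : {ffun 'I_m -> bool}, exists q : 'I_m, exists t : 'I_D,
      ~~ incons H r p1 p2 m m D A (gs s) (q * D + t).+1.
    move=> s; move: (Hn' s) => /forallPn [q /forallPn [t Ht]].
    by exists q, t.
  move=> /(_ Hex).
  have := @pigeon_arith m m D B k (leqnn m) (leq_div _ _) DQm m20.
  by rewrite ltnNge => /negP.
have Gv := G_valid H r p1 p2 m m D n' (gs s).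
have Ham := Hc _ Gv (m * D)%N.
have Hi : (\sum_(1 <= j < (m * D).+1) inconsistent_round A (G H r p1 p2 m m D (gs s)) j = m * D)%N.
  exact: (incons_sum Hs).
have Hch := changes_sum rp1 rp2 p12 Hrp2 kmP (gs s) D0 P0.
rewrite Hi in Ham.
move: Hch Ham.
set S := (\sum_(1 <= j < (m * D).+1) _)%N.
set T := (k * n'.+1 * 2 + m * (k * 2))%N => Hch Ham.
set X := (D * (k * (C.+1 * L)))%N.
have hX : (m <= 8 * X)%N.
  have : (D * (k * B.+1) <= X)%N by rewrite /X leq_mul2l hBL orbT.
  rewrite /Qd in hD hD2 hmQ; lia.
have h4 : (n'.+1 <= 4 * m)%N by lia.
have N1 : (n'.+1 * T <= m * D * (1024 * k * k * C.+1 * L))%N.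
  have -> : (m * D * (1024 * k * k * C.+1 * L) = 1024 * k * m * X)%N.
    by rewrite /X; lia.
  have hmn : (m <= n'.+1)%N by lia.
  have e0 : (m * (k * n'.+1) <= n'.+1 * (k * n'.+1))%N by rewrite leq_mul2r hmn orbT.
  have e1 : (n'.+1 * T <= 4 * k * (n'.+1 * n'.+1))%N by rewrite /T; lia.
  have e2 : (n'.+1 * n'.+1 <= 4 * m * (4 * m))%N by apply: leq_mul.
  have e3 : (m * m <= m * (8 * X))%N by apply: leq_mul.
  have e4 : (4 * k * (n'.+1 * n'.+1) <= 4 * k * (4 * m * (4 * m)))%N by rewrite leq_mul2l e2 orbT.
  have e5 : (64 * k * (m * m) <= 64 * k * (m * (8 * X)))%N by rewrite leq_mul2l e3 orbT.
  lia.
have T0 : (0 < T)%N by rewrite /T; lia.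
have MD0 : (0 < m * D)%N by rewrite muln_gt0 P0 D0.
have c0 : 0 <= c.
  rewrite leNgt; apply/negP => c0.
  have : c * S%:R <= 0 by apply: mulr_le0_ge0; [exact: ltW | exact: ler0n].
  move=> h; have := le_trans Ham h; rewrite lern0; lia.
have Ham2 : (m * D)%:R <= c * T%:R.
  apply: (le_trans Ham); apply: ler_wpM2l => //; by rewrite ler_nat.
rewrite -(@ler_pM2r _ T%:R); last by rewrite ltr0n.
apply: le_trans (_ : (m * D)%:R * (1024 * k * k * C.+1 * L)%N%:R <= _).
  by rewrite -!natrM ler_nat.
apply: le_trans (_ : c * T%:R * (1024 * k * k * C.+1 * L)%N%:R <= _).
  by apply: ler_wpM2r => //; rewrite ler0n.
by rewrite mulrAC.
Qed.
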